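(* Let $x_0>0$, $y_0>0$ with $x_0\neq y_0$. Then for every $T>0$ there exists a solution $(x,y)\in C^1([0,T])^2$ of the system \[ \dot x(t)=x(t)-\max_{s\in[0,t]}y(s),\qquad \dot y(t)=y(t)-\max_{s\in[0,t]}x(s),\quad t\in[0,T],\qquad x(0)=x_0,\ y(0)=y_0. \] *)

(* Defs.v *)
From Stdlib Require Import Reals.
From Coquelicot Require Import Coquelicot.
Open Scope R_scope.

Definition Icc (a b : R) (t : R) : Prop := a <= t <= b.

(* f has derivative l at t relative to the set D (one-sided at the ends of
   an interval): (f s - f t)/(s - t) -> l as s -> t, s in D, s <> t. *)
Definition has_deriv_within (D : R -> Prop) (f : R -> R) (t l : R) : Prop :=
  filterlim (fun s => (f s - f t) / (s - t))
    (within (fun s => D s /\ s <> t) (locally t)) (locally l).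

Definition C1_on (T : R) (f f' : R -> R) : Prop :=
  (forall t, Icc 0 T t -> has_deriv_within (Icc 0 T) f t (f' t)) /\
  (forall t, Icc 0 T t ->
     filterlim f' (within (Icc 0 T) (locally t)) (locally (f' t))).

(* running maximum max_{s in [0,t]} f s, as the supremum of the values
   (which is attained, i.e. a maximum, for continuous f). *)
Definition runmax (f : R -> R) (t : R) : R :=
  real (Lub_Rbar (fun v => exists s, 0 <= s <= t /\ v = f s)).

(* Main.v *)
Require Import Defs.
From Stdlib Require Import Reals Lra.
From Coquelicot Require Import Coquelicot.
Open Scope R_scope.

Lemma ballR (a e b : R) : ball a e b <-> Rabs (b - a) < e.
Proof. reflexivity. Qed.

Lemma deriv_within (D : R -> Prop) (f : R -> R) (t l : R) : is_derive f t l -> has_deriv_within D f t l.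
Proof.
  intros H. apply is_derive_Reals in H. unfold has_deriv_within.
  apply filterlim_locally. intros eps.
  destruct (H eps (cond_pos eps)) as [del Hd].
  exists del. intros s Hs [_ Hst]. apply ballR.
  apply ballR in Hs.
  assert (Hn : s - t <> 0) by lra.
  specialize (Hd (s - t) Hn Hs).
  assert (E : @eq R (t + (s - t)) s) by ring. rewrite E in Hd. exact Hd.
Qed.

Lemma cont_within (D : R -> Prop) (f : R -> R) (t : R) : ex_derive f t -> filterlim f (within D (locally t)) (locally (f t)).
Proof.
  intros H. apply ex_derive_continuous in H.
  eapply filterlim_filter_le_1; [|exact H].
  intros P HP. unfold within. eapply filter_imp; [|exact HP]. auto.
Qed.

Lemma runmax_at f t u : 0 <= u <= t -> (forall s, 0 <= s <= t -> f s <= f u) ->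
  runmax f t = f u.
Proof.
  intros Hu Hf. unfold runmax.
  rewrite (is_lub_Rbar_unique _ (Finite (f u))); [reflexivity|].
  split.
  - intros v [s [Hs ->]]. simpl. apply Hf; exact Hs.
  - intros b Hb. apply Hb. exists u. split; auto.
Qed.

Lemma main_case (a b : R) (hab : b < a) : forall T : R, 0 < T ->
  exists x x' y y' : R -> R,
    C1_on T x x' /\ C1_on T y y' /\
    (forall t, 0 <= t <= T ->
       x' t = x t - runmax y t /\ y' t = y t - runmax x t) /\
    x 0 = a /\ y 0 = b.
Proof.
  intros T HT.
  set (d := a - b).
  exists (fun t => b + d * exp t), (fun t => d * exp t),
         (fun t => b - d * t * exp t), (fun t => - (d * (1 + t) * exp t)).
  assert (Hd : 0 < d) by (unfold d; lra).
  split; [split|split; [split|split; [|split]]].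
  - intros t _. apply deriv_within. auto_derive; [auto|]; simpl; ring.
  - intros t _. apply (cont_within _ (fun t => d * exp t)). auto_derive. auto.
  - intros t _. apply deriv_within. auto_derive; [auto|]; simpl; ring.
  - intros t _. apply (cont_within _ (fun t => - (d * (1 + t) * exp t))). auto_derive. auto.
  - intros t Ht. split.
    + rewrite (runmax_at (fun t => b - d * t * exp t) t 0); [ring|lra|].
      intros s Hs. simpl. rewrite Rmult_0_r, Rmult_0_l.
      assert (0 < exp s) by apply exp_pos.
      assert (0 <= d * s * exp s).
      { apply Rmult_le_pos; [apply Rmult_le_pos|]; lra. }
      lra.
    + rewrite (runmax_at (fun t => b + d * exp t) t t); [ring|lra|].
      intros s Hs. simpl.
      assert (exp s <= exp t) by (destruct (Rle_lt_or_eq_dec s t (proj2 Hs)) as [Hl|Hl]; [left; apply exp_increasing; exact Hl|right; rewrite Hl; reflexivity]).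
      nra.
  - simpl. rewrite exp_0. unfold d. ring.
  - simpl. ring.
Qed.

Theorem mainTheorem3 (x0 y0 : R) (hx0 : 0 < x0) (hy0 : 0 < y0) (hxy : x0 <> y0) :
  forall T : R, 0 < T ->
  exists x x' y y' : R -> R,
    C1_on T x x' /\ C1_on T y y' /\
    (forall t, 0 <= t <= T ->
       x' t = x t - runmax y t /\ y' t = y t - runmax x t) /\
    x 0 = x0 /\ y 0 = y0.
Proof.
  intros T HT.
  destruct (Rlt_or_le y0 x0) as [H|H].
  - exact (main_case x0 y0 H T HT).
  - assert (H' : x0 < y0) by lra.
    destruct (main_case y0 x0 H' T HT) as [x [x' [y [y' [A [B [C [D E]]]]]]]].
    exists y, y', x, x'. split; [exact B|split; [exact A|split; [|split; assumption]]].
    intros t Ht. destruct (C t Ht). split; assumption.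
Qed.
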